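(* Let $s\ge2$, $1\le t\le k-1$, $N$ a positive multiple of $s^t$, $\lambda=N/s^t$, and let $p_{\max}$ be a positive integer with $\lambda/s^{k-t}\le p_{\max}\le\lambda$ and $p_{\max}\ne\lambda/s^{k-t}$. Then $G(k,s,t)^{\rm LP}=G_{P_{A'(k,s,t)^{\top}}}$.
   Context: Variables $x_{\mathbf{i}}$ are indexed by $\mathbf{i}=(i_1,\dots,i_k)\in\{0,\dots,s-1\}^k$. The LP relaxation of ILP (OA) is: minimize $\sum_{\mathbf i}x_{\mathbf i}$ subject to, for every $t$-subset $J\subseteq\{1,\dots,k\}$ and every $a\in\{0,\dots,s-1\}^J$, $\sum_{\mathbf i:\ i_j=a_j\ \forall j\in J}x_{\mathbf i}=\lambda$, and $0\le x_{\mathbf i}\le p_{\max}$. With feasible set $\mathcal F$, $G(k,s,t)^{\rm LP}$ is the set of permutations $\pi$ of the index set $\{0,\dots,s-1\}^k$ with $\pi(x)\in\mathcal F$ and equal objective value for all $x\in\mathcal F$, where $\pi(x)_{\mathbf i}=x_{\pi^{-1}(\mathbf i)}$. $A'(k,s,t)$ is the matrix whose rows are the coefficient vectors of the equalities $\sum_{\mathbf i:\ i_j=a_j\ \forall j\in J}x_{\mathbf i}=N/s^q$ for all $q\in\{0,\dots,t\}$, all $q$-subsets $J\subseteq\{1,\dots,k\}$ and all $a\in\{0,\dots,s-2\}^J$ (the case $q=0$ being $\sum_{\mathbf i}x_{\mathbf i}=N$). $P_{A'(k,s,t)^{\top}}$ is the $s^k\times s^k$ orthogonal projection matrix onto the row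 space of $A'(k,s,t)$, and for a square matrix $M$ indexed by $\{0,\dots,s-1\}^k$, $G_M=\{\pi:\Pi M\Pi^{\top}=M\}$ where $\Pi$ is the permutation matrix of $\pi$. *)

(* Defs.v *)
From HB Require Import structures.
From mathcomp Require Import all_boot all_order all_algebra.
From mathcomp Require Import fingroup perm.
Set Implicit Arguments. Unset Strict Implicit. Unset Printing Implicit Defensive.
Import Order.TTheory GRing.Theory Num.Theory.
Local Open Scope ring_scope.

Definition Idx (k s : nat) : finType := {ffun 'I_k -> 'I_s}.

Definition agrees k s (J : {set 'I_k}) (a i : Idx k s) : bool :=
  [forall j in J, i j == a j].

Definition permv (R : Type) k s (pi : {perm Idx k s}) (x : {ffun Idx k s -> R})
  : {ffun Idx k s -> R} := [ffun i => x ((pi^-1)%g i)].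

Definition LP_feasible (R : realFieldType) (k s t lambda pmax : nat)
  (x : {ffun Idx k s -> R}) : Prop :=
  (forall (J : {set 'I_k}) (a : Idx k s), #|J| = t ->
     \sum_(i | agrees J a i) x i = lambda%:R) /\
  (forall i, 0 <= x i /\ x i <= pmax%:R).

Definition LP_obj (R : realFieldType) k s (x : {ffun Idx k s -> R}) : R :=
  \sum_i x i.

Definition in_G_LP (R : realFieldType) (k s t lambda pmax : nat)
  (pi : {perm Idx k s}) : Prop :=
  forall x : {ffun Idx k s -> R}, @LP_feasible R k s t lambda pmax x ->
    @LP_feasible R k s t lambda pmax (permv pi x) /\
    LP_obj (permv pi x) = LP_obj x.

(* Rows of A'(k,s,t): pairs (J, a) with #|J| <= t, a_j <= s-2 for j in J;
   a is normalised to 0 outside J so that each (J, a in {0..s-2}^J) occurs once. *)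
Definition rowP k s (t : nat) (p : {set 'I_k} * Idx k s) : bool :=
  [&& (#|p.1| <= t)%N,
      [forall j in p.1, (p.2 j < s.-1)%N] &
      [forall j in ~: p.1, (p.2 j == 0 :> nat)]].

Definition RowIdx k s t : finType := {p : {set 'I_k} * Idx k s | rowP t p}.

Definition nidx k s := #|{: Idx k s}|.

Definition Aprime (R : realFieldType) k s t
  : 'M[R]_(#|{: RowIdx k s t}|, nidx k s) :=
  \matrix_(r, c) (agrees (val (enum_val r)).1 (val (enum_val r)).2
                          (enum_val c))%:R.

(* Orthogonal projection onto the row space of A: projection onto <<A>>
   along its orthogonal complement {u | u A^T = 0} = kermx A^T. *)
Definition orth_proj (R : realFieldType) m n (A : 'M[R]_(m, n)) : 'M[R]_n :=
  proj_mx <<A>>%MS (kermx A^T).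

Definition perm_matrix (R : realFieldType) k s (pi : {perm Idx k s})
  : 'M[R]_(nidx k s) :=
  \matrix_(r, c) (pi (enum_val c) == enum_val r)%:R.

Definition G_M (R : realFieldType) k s (M : 'M[R]_(nidx k s)) : {set {perm Idx k s}} :=
  [set pi | perm_matrix R pi *m M *m (perm_matrix R pi)^T == M].

(* Main.v *)
Require Import Defs.
From HB Require Import structures.
From mathcomp Require Import all_boot all_order all_algebra.
From mathcomp Require Import fingroup perm.
From mathcomp Require Import zify ring lra.
Set Implicit Arguments. Unset Strict Implicit. Unset Printing Implicit Defensive.
Import Order.TTheory GRing.Theory Num.Theory.
Local Open Scope ring_scope.

Section Lin.
Variable R : realFieldType.

Lemma mxtr0 m n (Y : 'M[R]_(m, n)) : Y *m Y^T = 0 -> Y = 0.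
Proof.
move=> H; apply/matrixP => i j; rewrite mxE.
have := congr1 (fun M : 'M[R]_m => M i i) H; rewrite !mxE => /eqP.
rewrite psumr_eq0 => [/allP/(_ j (mem_index_enum j))|k _]; last first.
  by rewrite mxE -expr2 sqr_ge0.
by rewrite mxE -expr2 sqrf_eq0 => /implyP/(_ isT)/eqP.
Qed.

Variables (m n : nat) (A : 'M[R]_(m, n)).
Let W := <<A>>%MS.
Let K := kermx A^T.
Let M := proj_mx W K.

Lemma orthWK p q (Z : 'M[R]_(p, n)) (Y : 'M[R]_(q, n)) :
  (Z <= W)%MS -> (Y <= K)%MS -> Z *m Y^T = 0.
Proof.
rewrite /W genmxE => /submxP[D ->] /sub_kermxP HY.
by rewrite -mulmxA -[A *m Y^T]trmxK trmx_mul trmxK HY trmx0 mulmx0.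
Qed.

Lemma capWK : (W :&: K = 0)%MS.
Proof.
apply: mxtr0; apply: orthWK; [exact: capmxSl | exact: capmxSr].
Qed.

Lemma fullWK p (X : 'M[R]_(p, n)) : (X <= W + K)%MS.
Proof.
apply: submx_full; rewrite /row_full mxrank_disjoint_sum ?capWK //.
rewrite /W /K mxrank_gen mxrank_ker mxrank_tr subnKC //.
exact: rank_leq_col.
Qed.

Lemma kerM p (X : 'M[R]_(p, n)) : X *m M = 0 -> (X <= K)%MS.
Proof.
move=> H; have := proj_mx_compl_sub (fullWK X).
by rewrite -/M H subr0.
Qed.

Variable P : 'M[R]_n.
Hypothesis PPt : P *m P^T = 1%:M.
Hypothesis PtP : P^T *m P = 1%:M.

Lemma key : (P *m M *m P^T == M) <-> (K *m P^T <= K)%MS.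
Proof.
split.
  move/eqP=> H.
  have HQ : P^T *m M = M *m P^T.
    by rewrite -{1}H !mulmxA PtP mul1mx.
  apply/sub_kermxP; apply/eqP; rewrite -sub_kermx; apply: kerM.
  rewrite -mulmxA HQ mulmxA proj_mx_0 ?mul0mx //; first exact: capWK.
move=> HKQ.
have HKP : (K *m P <= K)%MS.
  have Hr : \rank (K *m P^T) = \rank K.
    apply: mxrankMfree; rewrite row_free_unit.
    by case: (mulmx1_unit PtP).
  have HK : (K <= K *m P^T)%MS.
    by have := mxrank_leqif_sup HKQ; rewrite Hr => /leqif_refl.
  by have := submxMr P HK; rewrite -mulmxA PtP mulmx1.
have HWP : (W *m P <= W)%MS.
  set X := W *m P.
  have HY : (X - X *m M <= K)%MS by apply: proj_mx_compl_sub; apply: fullWK.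
  suff : X - X *m M = 0.
    by move/eqP; rewrite subr_eq0 => /eqP ->; apply: proj_mx_sub.
  apply: mxtr0; rewrite mulmxBl.
  have -> : X *m M *m (X - X *m M)^T = 0 by apply: orthWK => //; apply: proj_mx_sub.
  rewrite subr0 {1}/X -mulmxA.
  have -> : P *m (X - X *m M)^T = ((X - X *m M) *m P^T)^T by rewrite trmx_mul trmxK.
  apply: orthWK; first exact: submx_refl.
  exact: submx_trans (submxMr _ HY) HKQ.
have PM : P *m M = M *m P.
  have E : P *m M = (M + (1%:M - M)) *m P *m M by rewrite addrC subrK mul1mx.
  rewrite E mulmxDl mulmxDl.
  rewrite [(1%:M - M) *m P *m M]proj_mx_0; first last.
  - apply: submx_trans HKP; apply: submxMr.
    by have := proj_mx_compl_sub (fullWK 1%:M); rewrite mul1mx.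
  - exact: capWK.
  rewrite addr0 proj_mx_id //; first exact: capWK.
  apply: submx_trans HWP; apply: submxMr; rewrite -[M]mul1mx; exact: proj_mx_sub.
by rewrite PM -mulmxA PPt mulmx1.
Qed.
End Lin.

Section Comb.
Variables (R : realFieldType) (k s : nat).
Implicit Types (J : {set 'I_k}) (a i : Idx k s).

Definition cyl (F : Idx k s -> R) J a := \sum_(i | agrees J a i) F i.
Definition upd a (j : 'I_k) (c : 'I_s) : Idx k s :=
  [ffun l => if l == j then c else a l].

Lemma agrees_upd J a j c i : j \notin J ->
  agrees (j |: J) (upd a j c) i = agrees J a i && (i j == c).
Proof.
move=> jJ; apply/forallP/andP => [H|[/forallP H1 /eqP H2] l].
  split; last by have := H j; rewrite setU11 /upd ffunE eqxx.
  apply/forallP => l; apply/implyP => lJ; have := H l.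
  rewrite in_setU1 lJ orbT /upd ffunE /=.
  case: (l =P j) => [E|_]; [by rewrite -E lJ in jJ|]. done.
apply/implyP; rewrite in_setU1 /upd ffunE => /orP[/eqP->|lJ].
  by rewrite eqxx H2.
have := H1 l; rewrite lJ /=; case: (l =P j) => // E; by rewrite -E lJ in jJ.
Qed.

Lemma cyl_split F J a j : j \notin J ->
  cyl F J a = \sum_(c : 'I_s) cyl F (j |: J) (upd a j c).
Proof.
move=> jJ; rewrite /cyl (partition_big (fun i : Idx k s => i j) predT) //=.
by apply: eq_bigr => c _; apply: eq_bigl => i; rewrite agrees_upd.
Qed.

Lemma cyl_card J a : cyl (fun _ => 1) J a = (s ^ (k - #|J|))%:R.
Proof.
move: {2}(k - #|J|)%N (erefl (k - #|J|)%N) => m; elim: m J a => [|m IH] J a Hm.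
  have HJ : J = setT.
    apply/eqP; rewrite eqEcard subsetT cardsT card_ord.
    have := max_card J; rewrite card_ord => Hk; lia.
  rewrite HJ cardsT card_ord subnn expn0 /cyl (eq_bigl (pred1 a)) ?big_pred1_eq //= => i.
  apply/forallP/eqP => [H|->]; last by move=> l; rewrite eqxx implybT.
  by apply/ffunP => l; have := H l; rewrite in_setT /= => /eqP.
case: (pickP (fun j => j \notin J)) => [j jJ|H]; last first.
  have : J = setT by apply/setP => l; rewrite in_setT; have := H l => /= /negbFE.
  move=> HJ; move: Hm; rewrite HJ cardsT card_ord subnn.
  done.
rewrite (cyl_split _ _ jJ).
have Hc : #|j |: J| = #|J|.+1 by rewrite cardsU1 jJ.
rewrite (eq_bigr (fun _ => (s ^ m)%:R)); last first.
  have := max_card (j |: J); rewrite card_ord Hc => Hk.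
  move=> c _; rewrite IH; first by rewrite Hc (_ : (k - #|J|.+1 = m)%N) //; lia.
  rewrite Hc; lia.
by rewrite sumr_const card_ord -mulrnA -expnSr Hm.
Qed.

Lemma agrees_eq J a (b : Idx k s) i : (forall l, l \in J -> a l = b l) ->
  agrees J a i = agrees J b i.
Proof.
move=> H; apply/forallP/forallP => H2 l; have := H2 l;
  by case lJ: (l \in J) => //=; rewrite H.
Qed.

Lemma upd_id a j : upd a j (a j) = a.
Proof. by apply/ffunP => l; rewrite ffunE; case: eqP => // ->. Qed.

Variable t : nat.
Hypothesis tk : (t <= k)%N.
Hypothesis s0 : (0 < s)%N.

Definition KT F := forall J a, #|J| = t -> cyl F J a = 0.

Lemma KT_all F : KT F -> forall J a, (#|J| <= t)%N -> cyl F J a = 0.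
Proof.
move=> H J a; move: {2}(t - #|J|)%N (erefl (t - #|J|)%N) => m.
elim: m J a => [|m IH] J a Hm HJ.
  by apply: H; lia.
case: (pickP (fun j => j \notin J)) => [j jJ|Hn]; last first.
  have HJT : J = setT by apply/setP => l; rewrite in_setT; have := Hn l => /= /negbFE.
  by move: Hm; rewrite HJT cardsT card_ord; lia.
rewrite (cyl_split _ _ jJ) big1 // => c _; apply: IH; rewrite cardsU1 jJ /= add1n ?subnS ?Hm // -subn_gt0 Hm //.
Qed.

Lemma rows_KT F : (forall p : RowIdx k s t, cyl F (val p).1 (val p).2 = 0) -> KT F.
Proof.
move=> H.
suff Hs : forall m J a, (#|J| <= t)%N ->
    (#|[set l in J | (a l == s.-1 :> nat)]| <= m)%N -> cyl F J a = 0.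
  move=> J a HJ; apply: (Hs k); first by rewrite HJ.
  by have := max_card [set l in J | (a l == s.-1 :> nat)]; rewrite card_ord.
elim=> [|m IH] J a HJ Hc.
  pose a' : Idx k s := [ffun l => if l \in J then a l else Ordinal s0].
  have Hp : Defs.rowP t (J, a').
    rewrite /Defs.rowP /= HJ /=; apply/andP; split; apply/forallP => l; apply/implyP => lJ; rewrite /a'.
      rewrite ffunE lJ.
      move: Hc; rewrite leqn0 cards_eq0 => /eqP HS.
      have : l \in [set l in J | (a l == s.-1 :> nat)] = false by rewrite HS in_set0.
      rewrite inE lJ /= => /negbT Hne.
      have := ltn_ord (a l); move: Hne => H1 H2; by rewrite ltn_neqAle H1 -ltnS prednK.
    by rewrite inE in lJ; rewrite ffunE (negbTE lJ).
  have := H (exist _ (J, a') Hp); rewrite /= => E; rewrite -[RHS]E /cyl.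
  apply: eq_bigl => i; apply: agrees_eq => l lJ; by rewrite ffunE lJ.
set S := [set l in J | (a l == s.-1 :> nat)] in Hc.
case: (leqP #|S| m) => [Hle|Hgt]; first exact: IH.
have HS : #|S| = m.+1 by lia.
have [j jS] : exists j, j \in S.
  by apply/card_gt0P; rewrite HS.
have HSj : #|S :\ j| = m by have := cardsD1 j S; rewrite jS HS; lia.
move: (jS); rewrite inE => /andP[jJ /eqP ajs].
have jJ' : j \notin J :\ j by rewrite in_setD1 eqxx.
have E := cyl_split F a jJ'; rewrite setD1K // in E.
rewrite (bigD1 (a j)) //= upd_id in E.
have E1 : cyl F (J :\ j) a = 0.
  apply: IH; first by apply: leq_trans HJ; apply: subset_leq_card; apply: subsetDl.
  rewrite -HSj; apply: subset_leq_card; apply/subsetP => l.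
  rewrite !inE => /andP[/andP[lj lJ] ->]; by rewrite lj lJ.
have E2 : \sum_(c | c != a j) cyl F J (upd a j c) = 0.
  apply: big1 => c cne; apply: IH => //.
  rewrite -HSj; apply: subset_leq_card; apply/subsetP => l.
  rewrite !inE ffunE; case: (l =P j) => [->|lj] /=.
    move=> /andP[_ /eqP cs]; move: cne; rewrite -(inj_eq val_inj) /= ajs cs eqxx //.
  by move=> /andP[-> ->].
by move: E; rewrite E1 E2 addr0 => <-.
Qed.

End Comb.

Lemma perm_eqV (T : finType) (p : {perm T}) x y : (p x == y) = ((p^-1)%g y == x).
Proof. by rewrite -(inj_eq (@perm_inj _ p^-1)) permK eq_sym. Qed.

Section Mat.
Variables (R : realFieldType) (k s t : nat).
Hypothesis tk : (t <= k)%N.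
Hypothesis s0 : (0 < s)%N.

Lemma AT_cyl (v : 'rV[R]_(nidx k s)) r :
  (v *m (Aprime R k s t)^T) 0 r =
  cyl (fun i => v 0 (enum_rank i)) (val (enum_val r)).1 (val (enum_val r)).2.
Proof.
rewrite !mxE /cyl /= (reindex (@enum_val (Idx k s) predT)) /=; last first.
  by apply: onW_bij; apply: enum_val_bij.
rewrite [RHS]big_mkcond; apply: eq_bigr => c _; rewrite !mxE enum_valK.
by case: (agrees _ _ _); rewrite ?mulr1 ?mulr0.
Qed.

Lemma kerA (v : 'rV[R]_(nidx k s)) :
  (v <= kermx (Aprime R k s t)^T)%MS <-> KT t (fun i => v 0 (enum_rank i)).
Proof.
rewrite sub_kermx; split.
  move/eqP => H; apply: (rows_KT tk s0) => p.
  have := congr1 (fun M : 'M[R]_(1, _) => M 0 (enum_rank p)) H.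
  by rewrite AT_cyl enum_rankK mxE.
move=> H; apply/eqP/matrixP => i r; rewrite ord1 AT_cyl mxE.
apply: (KT_all tk s0 H).
by have := valP (enum_val r); rewrite /Defs.rowP => /and3P[].
Qed.

Lemma sum_pick (F : 'I_(nidx k s) -> R) (y : Idx k s) :
  \sum_r (y == enum_val r)%:R * F r = F (enum_rank y).
Proof.
rewrite (bigD1 (enum_rank y)) //= enum_rankK eqxx mul1r big1 ?addr0 // => r Hr.
rewrite (_ : (y == enum_val r) = false) ?mul0r //.
by apply/negbTE; apply: contra Hr => /eqP ->; rewrite enum_valK.
Qed.

Variable pi : {perm Idx k s}.
Let P := perm_matrix R pi.

Lemma PPt : P *m P^T = 1%:M.
Proof.
apply/matrixP => i j; rewrite !mxE.
rewrite (eq_bigr (fun c => ((pi^-1)%g (enum_val i) == enum_val c)%:R *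
                   (pi (enum_val c) == enum_val j)%:R)); last first.
  move=> c _; rewrite !mxE; congr (_ * _); congr (_ %:R).
  by rewrite perm_eqV.
rewrite sum_pick enum_rankK permKV.
by rewrite (inj_eq enum_val_inj).
Qed.

Lemma PtP : P^T *m P = 1%:M.
Proof.
apply/matrixP => i j; rewrite !mxE.
rewrite (eq_bigr (fun r => (pi (enum_val i) == enum_val r)%:R *
                   (pi (enum_val j) == enum_val r)%:R)); last first.
  by move=> c _; rewrite !mxE.
rewrite sum_pick enum_rankK eq_sym (inj_eq perm_inj).
by rewrite (inj_eq enum_val_inj).
Qed.

Lemma actQ (v : 'rV[R]_(nidx k s)) i :
  (v *m P^T) 0 (enum_rank i) = v 0 (enum_rank ((pi^-1)%g i)).
Proof.
rewrite mxE.
rewrite (eq_bigr (fun r => ((pi^-1)%g i == enum_val r)%:R * v 0 r)); last first.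
  move=> r _; rewrite !mxE enum_rankK mulrC; congr (_ * _); congr (_ %:R).
  by rewrite perm_eqV.
by rewrite sum_pick.
Qed.

End Mat.

Lemma KT_ext (R : realFieldType) k s t (F G : Idx k s -> R) :
  F =1 G -> KT t F -> KT t G.
Proof.
move=> E H J a HJ; rewrite -(H J a HJ) /cyl; apply: eq_bigr => i _; by rewrite E.
Qed.

Lemma cyl_add (R : realFieldType) k s (F G : Idx k s -> R) J a :
  cyl (fun i => F i + G i) J a = cyl F J a + cyl G J a.
Proof. by rewrite /cyl big_split. Qed.

Lemma cyl_scale (R : realFieldType) k s (e : R) (F : Idx k s -> R) J a :
  cyl (fun i => e * F i) J a = e * cyl F J a.
Proof. by rewrite /cyl mulr_sumr. Qed.

Lemma cyl_const (R : realFieldType) k s (e : R) J (a : Idx k s) :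
  cyl (fun _ => e) J a = e * (s ^ (k - #|J|))%:R.
Proof. by rewrite -(cyl_card R J a) -cyl_scale /cyl; apply: eq_bigr => i _; rewrite mulr1. Qed.

Theorem theorem7 (R : realFieldType) (k s t N pmax : nat) :
  (2 <= s)%N -> (1 <= t)%N -> (t <= k.-1)%N ->
  (0 < N)%N -> (s ^ t %| N)%N ->
  let lambda := (N %/ s ^ t)%N in
  (0 < pmax)%N ->
  (lambda%:R / (s ^ (k - t))%:R <= pmax%:R :> R) -> (pmax <= lambda)%N ->
  (pmax%:R != lambda%:R / (s ^ (k - t))%:R :> R) ->
  forall pi : {perm Idx k s},
    @in_G_LP R k s t lambda pmax pi <-> pi \in G_M (orth_proj (Aprime R k s t)).
Proof.
move=> hs ht htk hN hdiv lambda hp hle hple hne pi.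
have tk : (t <= k)%N by lia.
have s0 : (0 < s)%N by lia.
set u : R := lambda%:R / (s ^ (k - t))%:R.
have hS : (s ^ (k - t))%:R != 0 :> R by rewrite pnatr_eq0 -lt0n expn_gt0 s0.
have hlam : (0 < lambda)%N.
  by rewrite /lambda divn_gt0 ?expn_gt0 ?s0 // dvdn_leq.
have hu0 : 0 < u.
  by rewrite /u divr_gt0 // ?ltr0n // expn_gt0 s0.
have hu1 : u < pmax%:R by rewrite lt_neqAle eq_sym hne hle.
have cyl_u : forall (J : {set 'I_k}) (a : Idx k s), #|J| = t -> cyl (fun _ => u) J a = lambda%:R.
  by move=> J a HJ; rewrite cyl_const HJ /u mulfVK.
have Hkey := key (Aprime R k s t) (@PPt R k s pi) (@PtP R k s pi).
rewrite inE /orth_proj Hkey.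
split.
- move=> HG; apply/row_subP => i; rewrite row_mul.
  move: (row_sub i (kermx (Aprime R k s t)^T)).
  move: (row i _) => v /(kerA tk s0) Hv; apply/(kerA tk s0).
  set d := fun i => v 0 (enum_rank i).
  set B := \sum_i `|d i|.
  have hB : 0 <= B by apply: sumr_ge0 => j _; exact: normr_ge0.
  set del := Num.min u (pmax%:R - u).
  have hdel0 : 0 < del by rewrite lt_min hu0 subr_gt0 hu1.
  have hdel1 : del <= u by rewrite ge_min lexx.
  have hdel2 : del <= pmax%:R - u by rewrite ge_min lexx orbT.
  set eps := del / (1 + B).
  have heps : 0 < eps by rewrite divr_gt0 // ltr_wpDr.
  have hdi : forall j, `|eps * d j| <= del.
    move=> j; rewrite normrM (gtr0_norm heps).
    have : `|d j| <= 1 + B.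
      rewrite /B (bigD1 j) //= addrCA lerDl addr_ge0 //.
      by apply: sumr_ge0 => l _; exact: normr_ge0.
    move=> Hj; apply: le_trans (ler_wpM2l (ltW heps) Hj) _.
    by rewrite /eps mulfVK // gt_eqF // ltr_wpDr.
  pose x : {ffun Idx k s -> R} := [ffun j => u + eps * d j].
  have Fx : LP_feasible t lambda pmax x.
    split.
      move=> J a HJ; rewrite /cyl.
      rewrite (eq_bigr (fun j => u + eps * d j)); last by move=> j _; rewrite ffunE.
      by rewrite -/(cyl (fun j => u + eps * d j) J a) cyl_add cyl_u // cyl_scale Hv // mulr0 addr0.
    move=> j; rewrite ffunE; have := hdi j; rewrite ler_norml => /andP[h1 h2].
    split; lra.
  have [[Fp _] _] := HG x Fx.
  apply: (KT_ext (F := fun j => d ((pi^-1)%g j))).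
    by move=> j; rewrite /d actQ.
  move=> J a HJ; have := Fp J a HJ; rewrite /cyl.
  rewrite (eq_bigr (fun j => u + eps * d ((pi^-1)%g j))); last first.
    by move=> j _; rewrite /permv !ffunE.
  rewrite -/(cyl (fun j => u + eps * d ((pi^-1)%g j)) J a) cyl_add cyl_u // cyl_scale.
  move/eqP; rewrite -subr_eq0 addrC addKr mulf_eq0 gt_eqF //= => /eqP.
  done.
- move=> HKQ x [Fx Bx]; split; last first.
    rewrite /LP_obj /permv (reindex_inj (@perm_inj _ pi)) /=.
    by apply: eq_bigr => j _; rewrite ffunE permK.
  split; last by move=> j; rewrite /permv ffunE; exact: Bx.
  set d := fun j => x j - u.
  pose v : 'rV[R]_(nidx k s) := \row_c d (enum_val c).
  have Hv : (v <= kermx (Aprime R k s t)^T)%MS.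
    apply/(kerA tk s0); apply: (KT_ext (F := d)).
      by move=> j; rewrite mxE enum_rankK.
    move=> J a HJ; rewrite /d.
    rewrite /cyl (eq_bigr (fun j => x j + (-1) * u)); last by move=> j _; rewrite mulN1r.
    rewrite -/(cyl (fun j => x j + (-1) * u) J a) cyl_add.
    rewrite (@cyl_scale R k s (-1) (fun _ => u)) cyl_u // /cyl Fx //.
    by rewrite mulN1r subrr.
  have HvQ := submx_trans (submxMr _ Hv) HKQ.
  move/(kerA tk s0): HvQ => HvQ.
  have HK : KT t (fun j => d ((pi^-1)%g j)).
    apply: KT_ext HvQ => j; by rewrite actQ mxE enum_rankK.
  move=> J a HJ.
  rewrite (eq_bigr (fun j => d ((pi^-1)%g j) + u)); last first.
    by move=> j _; rewrite /permv ffunE /d subrK.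
  by rewrite -/(cyl (fun j => d ((pi^-1)%g j) + u) J a) cyl_add HK // cyl_u // add0r.
Qed.
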